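(* Let $K=(V,E)$ be a complete graph, $r:V\to\mathbb{Z}_+$ and $F\subseteq V$. Fix an ordering of $F$ by non-increasing $r$-value and an ordering of $V\setminus F$ by non-increasing $r$-value. Then there exist $k\in\{0,\dots,|F|\}$ and $\ell\in\{0,\dots,|V|-|F|\}$ such that the union of the first $k$ vertices of $F$ and the first $\ell$ vertices of $V\setminus F$ (in these orderings) is a minimum-size vector connectivity set for $(K,F,r)$.
   Context: For a vertex $v$ and a set $U\subseteq V$, a $v$--$U$ fan of order $k$ is a collection of $k$ paths, each connecting $v$ to a vertex of $U$, pairwise vertex-disjoint except at $v$ (if $v\in U$, the trivial one-vertex path $(v)$ may be one of them); $v$ is $k$-linked to $U$ if such a fan exists. A vector connectivity set for $(K,F,r)$ is a set $S\subseteq V$ such that every $v\in V\setminus S$ is $r(v)$-linked to $S\cup F$. *)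

(* Defs.v *)
From mathcomp Require Import all_boot.
Set Implicit Arguments. Unset Strict Implicit. Unset Printing Implicit Defensive.

Section VC.
Variable V : finType.

Definition complete_graph : rel V := fun x y => x != y.

(* The trivial path (v)
   corresponds to s = [::] and ends in U iff v \in U. *)
Definition vpath_to (e : rel V) (v : V) (U : {set V}) (s : seq V) : bool :=
  [&& path e v s, uniq (v :: s) & last v s \in U].

Definition fan (e : rel V) (v : V) (U : {set V}) (k : nat)
  (P : 'I_k -> seq V) : Prop :=
  (forall i, vpath_to e v U (P i)) /\
  (forall i j, i != j -> P i != P j /\ [disjoint P i & P j]).

Definition linked (e : rel V) (v : V) (U : {set V}) (k : nat) : Prop :=
  exists P : 'I_k -> seq V, @fan e v U k P.

Definition vc_set (e : rel V) (F : {set V}) (r : V -> nat) (S : {set V})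
  : Prop :=
  forall v, v \notin S -> linked e v (S :|: F) (r v).

Definition min_vc_set (e : rel V) (F : {set V}) (r : V -> nat)
  (S : {set V}) : Prop :=
  vc_set e F r S /\ (forall S', vc_set e F r S' -> #|S| <= #|S'|).

Definition r_ordering (r : V -> nat) (A : {set V}) (s : seq V) : bool :=
  [&& uniq s, perm_eq s (enum A) & sorted (fun x y => r y <= r x) s].

End VC.

(* Main.v *)
Require Import Defs.
From mathcomp Require Import all_boot.
Set Implicit Arguments. Unset Strict Implicit.

Lemma linked_le (V : finType) v (U : {set V}) k :
  linked (@complete_graph V) v U k -> k <= #|U|.
Proof.
case=> P [Hp Hd].
pose f := fun i : 'I_k => last v (P i).
have lastin : forall i, P i != [::] -> f i \in P i.
  by move=> i; rewrite /f; case: (P i) => [|a s] //= _; exact: mem_last.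
have finj : injective f.
  move=> i j Hij; apply/eqP; apply/negPn/negP => Hne.
  have [Pne Pdis] := Hd i j Hne.
  have /and3P[_ ui _] := Hp i. have /and3P[_ uj _] := Hp j.
  case Ei: (P i) => [|a si]; case Ej: (P j) => [|b sj].
  - by move: Pne; rewrite Ei Ej eqxx.
  - have : f j \in P j by apply: lastin; rewrite Ej.
    rewrite -Hij /f Ei /= => vin. by move: uj; rewrite /= vin.
  - have : f i \in P i by apply: lastin; rewrite Ei.
    rewrite Hij /f Ej /= => vin. by move: ui; rewrite /= vin.
  - have h1 : f i \in P i by apply: lastin; rewrite Ei.
    have h2 : f i \in P j by rewrite Hij; apply: lastin; rewrite Ej.
    by rewrite (disjointFr Pdis h1) in h2.
have -> : k = #|[set f i | i in 'I_k]| by rewrite card_imset // card_ord.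
apply: subset_leq_card; apply/subsetP => x /imsetP [i _ ->].
by have /and3P[_ _ ->] := Hp i.
Qed.

Lemma le_linked (V : finType) v (U : {set V}) k :
  k <= #|U| -> linked (@complete_graph V) v U k.
Proof.
move=> hk.
pose ps := (if v \in U then [:: [::]] else [::]) ++ [seq [:: u] | u <- enum (U :\ v)].
have sz : size ps = #|U|.
  rewrite size_cat size_map -cardE (cardsD1 v U).
  by case: (v \in U).
have vp : forall s, s \in ps -> vpath_to (@complete_graph V) v U s.
  move=> s; rewrite mem_cat; case/orP.
    by case: ifP => // vU; rewrite inE => /eqP ->; rewrite /vpath_to /= vU.
  case/mapP => u; rewrite mem_enum !inE => /andP[uv uU] ->.
  by rewrite /vpath_to /= /complete_graph inE eq_sym uv uU.
have up : uniq ps.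
  rewrite cat_uniq; apply/and3P; split.
  - by case: ifP.
  - apply/hasPn => s /mapP [u _ ->]; by case: ifP.
  - rewrite map_inj_uniq ?enum_uniq //; by move=> a b [].
have dp : forall s t, s \in ps -> t \in ps -> s != t -> [disjoint s & t].
  move=> s t; rewrite !mem_cat => hs ht nst; rewrite disjoint_has; apply/hasPn => z zs; apply/negP => zt.
  move: hs ht nst zs zt.
  case/orP => [|/mapP [a _ ->]].
    by case: ifP => _; rewrite ?inE => // /eqP ->.
  case/orP => [|/mapP [b _ ->]].
    by case: ifP => _; rewrite ?inE => // /eqP ->.
  by rewrite !inE => ab /eqP za /eqP zb; move: ab; rewrite -za -zb eqxx.
have hi : forall i : 'I_k, i < size ps by move=> i; rewrite sz (leq_trans (ltn_ord i) hk).
exists (fun i => nth [::] ps i); split.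
  by move=> i; apply: vp; apply: mem_nth.
move=> i j nij.
have ne : nth [::] ps i != nth [::] ps j by rewrite nth_uniq.
by split => //; apply: dp => //; apply: mem_nth.
Qed.

Lemma vc_iff (V : finType) (F : {set V}) r S :
  vc_set (@complete_graph V) F r S <-> forall v, v \notin S -> r v <= #|S :|: F|.
Proof.
split=> H v vS; [exact: linked_le (H v vS) | exact: le_linked (H v vS)].
Qed.

Lemma card_disjU (V : finType) (A F : {set V}) :
  A \subset ~: F -> #|A :|: F| = #|A| + #|F|.
Proof.
move=> sub; rewrite cardsU.
have -> : A :&: F = set0.
  apply/setP => x; rewrite !inE; apply/negP => /andP[xA xF].
  by move/subsetP: sub => /(_ x xA); rewrite inE xF.
by rewrite cards0 subn0.
Qed.

Theorem mainTheorem9 (V : finType) (r : V -> nat) (F : {set V})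
  (sF sN : seq V) :
  r_ordering r F sF -> r_ordering r (~: F) sN ->
  exists k l, k <= #|F| /\ l <= #|V| - #|F| /\
    min_vc_set (@complete_graph V) F r [set x in take k sF ++ take l sN].
Proof.
move=> /and3P[uF pF soF] /and3P[uN pN soN].
have memF : forall x, (x \in sF) = (x \in F) by move=> x; rewrite (perm_mem pF) mem_enum.
have memN : forall x, (x \in sN) = (x \notin F) by move=> x; rewrite (perm_mem pN) mem_enum inE.
have szF : size sF = #|F| by rewrite (perm_size pF) cardE.
have szN : size sN = #|~: F| by rewrite (perm_size pN) cardE.
have tr : transitive (fun x y : V => r y <= r x).
  by move=> a b c h1 h2; exact: leq_trans h2 h1.
have rf : reflexive (fun x y : V => r y <= r x) by move=> a.
pose vcb (S : {set V}) := [forall v, (v \notin S) ==> (r v <= #|S :|: F|)].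
have vcbP : forall S, vcb S = true <-> vc_set (@complete_graph V) F r S.
  move=> S; split.
    by move=> /forallP H; apply/vc_iff => v vS; move/implyP: (H v); apply.
  by move/vc_iff=> H; apply/forallP => v; apply/implyP; apply: H.
have vT : vcb setT by apply/forallP => v; rewrite inE.
case: (arg_minnP (fun S : {set V} => #|S|) vT) => S0 /vcbP vS0 minS0.
move/vc_iff: (vS0) => vS0'.
pose T := #|S0 :|: F|.
pose l := #|S0 :\: F|.
pose k := find (fun x => r x <= T) sF.
have eT : T = l + #|F|.
  have -> : T = #|(S0 :\: F) :|: F|.
    by rewrite /T; congr #|pred_of_set _|; apply/setP => x; rewrite !inE; case: (x \in F); rewrite ?orbT ?orbF.
  by rewrite card_disjU //; apply/subsetP => x; rewrite !inE => /andP[].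
have lN : l <= #|~: F|.
  by apply: subset_leq_card; apply/subsetP => x; rewrite !inE => /andP[].
have kF : k <= size sF by apply: find_size.
exists k, l; split; first by rewrite -szF.
split; first by rewrite -(cardsC F) addKn.
set S := [set x in _].
have cS : #|S| <= #|S0|.
  rewrite cardsE (leq_trans (card_size _)) // size_cat !size_take_min.
  rewrite -(cardsID F S0) leq_add ?geq_minl //.
  have -> : minn k (size sF) = #|take k sF|.
    by rewrite (card_uniqP (take_uniq _ uF)) size_take_min.
  apply: subset_leq_card; apply/subsetP => x xin.
  have xsF : x \in sF by apply: mem_take xin.
  rewrite (in_take_leq _ kF) in xin.
  have := before_find x xin; rewrite nth_index // => /negbT; rewrite -ltnNge => rx.
  rewrite inE -memF xsF andbT; apply/negPn/negP => xS0.
  by move: (vS0' x xS0); rewrite leqNgt rx.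
split; last first.
  by move=> S' /vcbP vS'; rewrite (leq_trans cS) // minS0.
apply/vc_iff => v vS.
have TS : T <= #|S :|: F|.
  rewrite eT.
  have -> : l = #|[set x in take l sN]|.
    by rewrite cardsE (card_uniqP (take_uniq _ uN)) size_takel // szN.
  rewrite -card_disjU; last first.
    by apply/subsetP => x; rewrite inE => /mem_take; rewrite memN inE.
  apply: subset_leq_card; apply/subsetP => x; rewrite !inE mem_cat.
  by case/orP => ->; rewrite ?orbT.
apply: leq_trans TS.
case vF: (v \in F).
  have vsF : v \in sF by rewrite memF.
  have ki : k <= index v sF.
    rewrite leqNgt -(in_take_leq _ kF); apply/negP => vt.
    by move: vS; rewrite inE mem_cat vt.
  have iS : index v sF < size sF by rewrite index_mem.
  have kS : k < size sF by apply: leq_ltn_trans iS.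
  have hk : r (nth v sF k) <= T.
    by apply: (nth_find v (a := fun x => r x <= T)); rewrite has_find.
  have := sorted_leq_nth tr rf v soF; rewrite /= => /(_ k (index v sF)).
  rewrite !inE kS iS nth_index // => /(_ isT isT ki) h.
  exact: leq_trans h hk.
have vsN : v \in sN by rewrite memN vF.
have lsN : l <= size sN by rewrite szN.
have li : l <= index v sN.
  rewrite leqNgt -(in_take_leq _ lsN); apply/negP => vt.
  by move: vS; rewrite inE mem_cat vt orbT.
have iS : index v sN < size sN by rewrite index_mem.
rewrite leqNgt; apply/negP => Tv.
have : (index v sN).+1 <= l; last by rewrite ltnNge li.
have -> : (index v sN).+1 = #|take (index v sN).+1 sN|.
  by rewrite (card_uniqP (take_uniq _ uN)) size_takel.
apply: subset_leq_card; apply/subsetP => x xin.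
have xsN : x \in sN by apply: mem_take xin.
rewrite (in_take_leq _ iS) ltnS in xin.
have := sorted_leq_nth tr rf v soN; rewrite /= => /(_ (index x sN) (index v sN)).
rewrite !inE iS index_mem xsN !nth_index // => /(_ isT isT xin) h.
have Tx : T < r x by apply: leq_trans h.
rewrite -memN xsN /=; apply/negPn/negP => xS0.
by move: (vS0' x xS0); rewrite leqNgt Tx.
Qed.
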